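(* A locally connected metrizable space $X$ has a metrizable one-point connectification if and only if $X$ has no compact component.
   Context: A one-point connectification of a space $X$ is a connected space $Y$ which contains $X$ as a dense subspace and such that $Y\setminus X$ is a singleton. *)

(* Defs.v *)
From HB Require Import structures.
From mathcomp Require Import all_boot all_order all_algebra.
From mathcomp Require Import all_classical all_reals all_analysis.
From mathcomp Require Import Rstruct Rstruct_topology.
From Stdlib Require Import Rdefinitions.

Set Implicit Arguments.
Unset Strict Implicit.
Unset Printing Implicit Defensive.

Local Open Scope classical_set_scope.

Definition metric_compatible (T : topologicalType) (d : T -> T -> R) : Prop :=
  [/\ (forall x y : T, Rle 0%R (d x y)),
      (forall x y : T, d x y = 0%R <-> x = y),
      (forall x y : T, d x y = d y x),
      (forall x y z : T, Rle (d x z) (Rplus (d x y) (d y z))) &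
      (forall A : set T, open A <->
         (forall x, A x -> exists e : R, Rlt 0%R e /\
            (forall y, Rlt (d x y) e -> A y)))].

Definition metrizable (T : topologicalType) : Prop :=
  exists d : T -> T -> R, metric_compatible d.

Definition locally_connected (T : topologicalType) : Prop :=
  forall (x : T) (U : set T), open U -> U x ->
    exists V : set T, [/\ open V, V x, V `<=` U & connected V].

Definition embedding (X Y : topologicalType) (f : X -> Y) : Prop :=
  [/\ continuous f, injective f &
      (forall U : set X, open U ->
         exists V : set Y, open V /\ f @` U = V `&` range f)].

Definition one_point_connectification (X Y : topologicalType) (f : X -> Y) : Prop :=
  [/\ embedding f, connected [set: Y], dense (range f) &
      exists p : Y, ~` range f = [set p]].

(* Main.v *)
From Stdlib Require Import Reals Lra Lia Classical ClassicalEpsilon.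
Require Import Defs.
From HB Require Import structures.
From mathcomp Require Import all_boot all_order all_algebra.
From mathcomp Require Import all_classical all_reals all_analysis.
From mathcomp Require Import Rstruct Rstruct_topology.
Local Open Scope classical_set_scope.
Local Open Scope R_scope.

Definition mopen (T : Type) (D : T -> T -> R) (A : set T) : Prop :=
  forall x, A x -> exists e : R, Rlt 0 e /\ (forall y, Rlt (D x y) e -> A y).

Arguments mopen {T}.
Definition mtop (T : choiceType) (D : T -> T -> R) : Type := T.
HB.instance Definition _ (T : choiceType) (D : T -> T -> R) := Choice.on (mtop T D).

Lemma mopenT (T : choiceType) (D : T -> T -> R) : mopen D setT.
Proof. move=> x _; exists 1; split => //; exact: Rlt_0_1. Qed.

Lemma mopenI (T : choiceType) (D : T -> T -> R) : setI_closed (mopen D).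
Proof.
move=> A B oA oB x [Ax Bx].
have [e1 [e1p H1]] := oA x Ax; have [e2 [e2p H2]] := oB x Bx.
exists (Rmin e1 e2); split; first exact: Rmin_pos.
move=> y hy; split; [apply: H1|apply: H2].
- exact: Rlt_le_trans hy (Rmin_l _ _).
- exact: Rlt_le_trans hy (Rmin_r _ _).
Qed.

Lemma mopenU (T : choiceType) (D : T -> T -> R) (I : Type) (f : I -> set T) :
  (forall i, mopen D (f i)) -> mopen D (\bigcup_i f i).
Proof.
move=> H x [i _ fx]; have [e [ep He]] := H i x fx.
by exists e; split => // y /He fy; exists i.
Qed.

HB.instance Definition _ (T : choiceType) (D : T -> T -> R) :=
  isOpenTopological.Build (mtop T D) (@mopenT T D) (@mopenI T D) (@mopenU T D).

Lemma mtop_openE (T : choiceType) (D : T -> T -> R) (A : set (mtop T D)) : open A = mopen D A.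
Proof. reflexivity. Qed.


Section Met.
Context (T : topologicalType) (d : T -> T -> R) (H : metric_compatible d).

Lemma md_ge0 x y : 0 <= d x y. Proof. by case: H. Qed.
Lemma md0 x : d x x = 0. Proof. by case: H => _ h _ _ _; apply (h x x). Qed.
Lemma md_eq x y : d x y = 0 -> x = y. Proof. by case: H => _ h _ _ _; apply (h x y). Qed.
Lemma md_sym x y : d x y = d y x. Proof. by case: H. Qed.
Lemma md_tri x y z : d x z <= d x y + d y z. Proof. by case: H. Qed.
Lemma mopen_iff A : open A <-> mopen d A. Proof. by case: H. Qed.

Lemma ball_open x e : open [set y | d x y < e].
Proof.
apply/mopen_iff => y /= hy; exists (e - d x y); split; first lra.
move=> z hz; have := md_tri x y z; lra.
Qed.

Lemma nbhs_ball x A : nbhs x A <-> exists e, 0 < e /\ forall y, d x y < e -> A y.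
Proof.
split.
  rewrite nbhsE => -[B [oB Bx] BA].
  have [e [ep He]] := (iffLR (mopen_iff B) oB) x Bx.
  by exists e; split => // y /He /BA.
move=> [e [ep He]]; rewrite nbhsE; exists [set y | d x y < e] => //.
split; first exact: ball_open.
by rewrite /= md0.
Qed.

Lemma m_hausdorff : hausdorff_space T.
Proof.
move=> p q cl; apply: NNPP => npq.
have r0 : 0 < d p q.
  have := md_ge0 p q => h; case: (Rle_lt_or_eq_dec _ _ h) => // /esym /md_eq; done.
have [z [/= hp hq]] : [set y | d p y < d p q / 2] `&` [set y | d q y < d p q / 2] !=set0.
  apply: cl; apply/nbhs_ball; exists (d p q / 2); split => //; lra.
have := md_tri p z q; rewrite (md_sym z q); lra.
Qed.

End Met.
Arguments md_ge0 {T d} H. Arguments md0 {T d} H. Arguments md_eq {T d} H.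
Arguments md_sym {T d} H. Arguments md_tri {T d} H. Arguments mopen_iff {T d} H.
Arguments ball_open {T d} H. Arguments nbhs_ball {T d} H. Arguments m_hausdorff {T d} H.

Fixpoint iterL {T : Type} (nx : list T -> T) (n : nat) : list T :=
  match n with O => nil | S m => nx (iterL nx m) :: iterL nx m end.

Lemma small_inv r : 0 < r -> exists N : nat, / (INR N + 1) < r.
Proof.
move=> r0; have [N [HN N0]] := archimed_cor1 r r0; exists N.
apply: Rle_lt_trans HN; apply: Rinv_le_contravar; last lra.
by apply: lt_0_INR.
Qed.

Lemma inv_mono (n m : nat) : (n <= m)%coq_nat -> / (INR m + 1) <= / (INR n + 1).
Proof.
move=> h; apply: Rinv_le_contravar; first by have := pos_INR n; lra.
by have := le_INR _ _ h; lra.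
Qed.

Lemma inv_pos (n : nat) : 0 < / (INR n + 1).
Proof. by apply: Rinv_0_lt_compat; have := pos_INR n; lra. Qed.

Section SeqCompact.
Context (T : topologicalType) (d : T -> T -> R) (H : metric_compatible d).

Definition clusterseq (s : nat -> T) x :=
  forall e N, 0 < e -> exists n, (N <= n)%coq_nat /\ d x (s n) < e.

Lemma tot_bounded (C : set T) :
  (forall s, (forall n, C (s n)) -> exists x, clusterseq s x) ->
  forall e, 0 < e -> exists l : list T, (forall c, List.In c l -> C c) /\
     forall x, C x -> exists c, List.In c l /\ d c x < e.
Proof.
move=> Hs e e0; apply: NNPP => ntb.
have next : forall l : list T, (forall c, List.In c l -> C c) ->
    exists x, C x /\ forall c, List.In c l -> e <= d c x.
  move=> l hl; apply: NNPP => nx; apply: ntb; exists l; split => // x Cx.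
  apply: NNPP => ny; apply: nx; exists x; split => // c cl.
  by apply: Rnot_lt_le => hc; apply: ny; exists c.
have [x0 _] := next nil (fun c (h : List.In c nil) => match h with end).
pose P l x := C x /\ forall c, List.In c l -> e <= d c x.
pose nx l := epsilon (inhabits x0) (P l).
have allC : forall n c, List.In c (iterL nx n) -> C c.
  elim=> [//|n IH] c /= [<-|]; last exact: IH.
  by have [] := @epsilon_spec _ (inhabits x0) (P (iterL nx n)) (next _ (IH)).
pose s n := nx (iterL nx n).
have Ps n : P (iterL nx n) (s n) := @epsilon_spec _ _ _ (next _ (allC n)).
have ins : forall n m, (m < n)%coq_nat -> List.In (s m) (iterL nx n).
  elim=> [|n IH] m hm; first lia.
  have [->|h] : m = n \/ (m < n)%coq_nat by lia.
    by left.
  by right; apply: IH.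
have [x cx] := Hs s (fun n => (Ps n).1).
have e2 : 0 < e / 2 by lra.
have [n1 [_ h1]] := cx (e / 2) O e2.
have [n2 [h12 h2]] := cx (e / 2) (S n1) e2.
have := (Ps n2).2 _ (ins _ _ h12).
have := md_tri H (s n1) x (s n2); rewrite (md_sym H (s n1) x); lra.
Qed.

Lemma seq_compact (C : set T) : closed C ->
  (forall s, (forall n, C (s n)) -> exists x, clusterseq s x) -> compact C.
Proof.
move=> cC Hs F PF FC.
pose large (A : set T) := forall B, F B -> A `&` B !=set0.
have lC : large C by move=> B FB; exact: (@filter_ex _ F PF _ (filterI FC FB)).
have lU : forall r (l : list T), large (fun y => exists c, List.In c l /\ d c y < r) ->
    exists c, List.In c l /\ large [set y | d c y < r].
  move=> r; elim=> [|a l IH] hl.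
    by have [y [[c [[]]]]] := hl setT filterT.
  have [la|nla] := pselect (large [set y | d a y < r]).
    by exists a; split => //; left.
  have [B1 [FB1 hB1]] : exists B1, F B1 /\ ~ ([set y | d a y < r] `&` B1 !=set0).
    apply: NNPP => hn; apply: nla => B FB; apply: NNPP => hB; apply: hn.
    by exists B.
  have [c [cl lc]] : exists c, List.In c l /\ large [set y | d c y < r].
    apply: IH => B FB.
    have [y [[c [[<-|cl] hc]] [By B1y]]] := hl _ (filterI FB FB1).
      by exfalso; apply: hB1; exists y.
    by exists y; split => //; exists c.
  by exists c; split => //; right.
have ex_c : forall n : nat, exists c, C c /\ large [set y | d c y < / (INR n + 1)].
  move=> n; have [l [lC' lcov]] := @tot_bounded C Hs _ (inv_pos n).
  have [c [cl lc]] := lU (/ (INR n + 1)) l (fun B FB =>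
    let: ex_intro y (conj Cy By) := lC B FB in
    ex_intro _ y (conj (lcov y Cy) By)).
  by exists c; split => //; apply: lC'.
have [x0 _] := lC setT filterT.
pose cs n := epsilon (inhabits x0) (fun c => C c /\ large [set y | d c y < / (INR n + 1)]).
have Pcs n : C (cs n) /\ large [set y | d (cs n) y < / (INR n + 1)].
  exact: (@epsilon_spec _ _ _ (ex_c n)).
have [x cx] := Hs cs (fun n => (Pcs n).1).
have clx : cluster F x.
  move=> A B FA /(nbhs_ball H) [e [e0 He]].
  have [N hN] := small_inv (e / 2) ltac:(lra).
  have [n [Nn hn]] := cx (e / 2) N ltac:(lra).
  have [y [hy Ay]] := (Pcs n).2 A FA.
  exists y; split => //; apply: He.
  have := inv_mono _ _ Nn; have := md_tri H x (cs n) y; simpl in hy; lra.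
exists x; split => //.
rewrite (closure_id C).1 //= => B nB.
by have [y [Cy By]] := clx C B FC nB; exists y.
Qed.

End SeqCompact.
Arguments seq_compact {T d} H C.

Section Comps.
Context (X : topologicalType) (d : X -> X -> R) (H : metric_compatible d).

Definition nocl (s : nat -> X) :=
  forall z, exists e, 0 < e /\ exists N, forall n, (N <= n)%coq_nat -> e <= d z (s n).

Lemma comp_open (LC : locally_connected X) x : open (connected_component [set: X] x).
Proof.
apply/(mopen_iff H) => y cy.
have [V [oV Vy _ cV]] := LC y setT openT Logic.I.
have [e [e0 He]] := (iffLR (mopen_iff H V) oV) y Vy.
exists e; split => // z /He Vz.
rewrite (same_connected_component cy).
exact: (connected_component_max Vy (fun _ _ => Logic.I) cV).
Qed.

Lemma noncompact_seq x : ~ compact (connected_component [set: X] x) ->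
  exists s, (forall n, connected_component [set: X] x (s n)) /\ nocl s.
Proof.
move=> nc; apply: NNPP => ns; apply: nc.
apply: (seq_compact H (connected_component [set: X] x)); first exact: (component_closed closedT).
move=> s hs; apply: NNPP => ncl; apply: ns; exists s; split => // z.
apply: NNPP => nz; apply: ncl; exists z => e N e0.
apply: NNPP => nn; apply: nz; exists e; split => //; exists N => n Nn.
by apply: Rnot_lt_le => hlt; apply: nn; exists n.
Qed.

End Comps.
Arguments nocl {X} d s.
Arguments comp_open {X d} H LC x.
Arguments noncompact_seq {X d} H x.

Section Phi.
Context (X : topologicalType) (d : X -> X -> R) (H : metric_compatible d)
  (LC : locally_connected X)
  (NC : ~ (exists x : X, compact (connected_component [set: X] x))) (x0 : X).

Local Notation comp x := (connected_component [set: X] x).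

Definition seqOf (K : set X) : nat -> X :=
  epsilon (inhabits (fun _ : nat => x0)) (fun s => (forall n, K (s n)) /\ nocl d s).

Lemma seqOf_spec x : (forall n, comp x (seqOf (comp x) n)) /\ nocl d (seqOf (comp x)).
Proof.
apply: (@epsilon_spec _ _ (fun s => (forall n, comp x (s n)) /\ nocl d s)).
apply: (noncompact_seq H) => cx; apply: NC; by exists x.
Qed.

Definition Ex (x : X) : set R :=
  [set t | exists y n, t = d x (seqOf (comp y) n) + / (INR n + 1)].

Definition phi (x : X) : R := inf (Ex x).

Lemma Ex_lb x : has_lbound (Ex x).
Proof.
exists 0 => t [y [n ->]]; apply/RleP.
have := md_ge0 H x (seqOf (comp y) n); have := inv_pos n; lra.
Qed.

Lemma phi_le x y n : phi x <= d x (seqOf (comp y) n) + / (INR n + 1).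
Proof. by apply/RleP; apply: (ge_inf (Ex_lb x)); exists y, n. Qed.

Lemma phi_ge x m : (forall y n, m <= d x (seqOf (comp y) n) + / (INR n + 1)) ->
  m <= phi x.
Proof.
move=> hm; apply/RleP; apply: lb_le_inf.
  by exists (d x (seqOf (comp x) 0) + / (INR 0 + 1)), x, O.
by move=> t [y [n ->]]; apply/RleP.
Qed.

Lemma phi_small x n : phi (seqOf (comp x) n) <= / (INR n + 1).
Proof. have := phi_le (seqOf (comp x) n) x n; rewrite (md0 H); lra. Qed.

Lemma phi_lip x y : phi x <= d x y + phi y.
Proof.
suff : phi x - d x y <= phi y by lra.
apply: phi_ge => z n; have := phi_le x z n.
have := md_tri H x y (seqOf (comp z) n); lra.
Qed.

Lemma phi_pos x : 0 < phi x.
Proof.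
have [eps [eps0 Heps]] := (iffLR (mopen_iff H _) (comp_open H LC x)) x
  (@connected_component_refl _ setT x Logic.I).
have [e [e0 [N HN]]] := (seqOf_spec x).2 x.
have iN := inv_pos N.
pose m := Rmin eps (Rmin e (/ (INR N + 1))).
have m0 : 0 < m by apply: Rmin_pos => //; apply: Rmin_pos.
have m1 : m <= eps := Rmin_l _ _.
have m2 : m <= e := Rle_trans _ _ _ (Rmin_r _ _) (Rmin_l _ _).
have m3 : m <= / (INR N + 1) := Rle_trans _ _ _ (Rmin_r _ _) (Rmin_r _ _).
apply: Rlt_le_trans m0 _; apply: phi_ge => y n.
have := inv_pos n.
have [hle|hlt] := Rle_lt_dec eps (d x (seqOf (comp y) n)); first lra.
have cx := Heps _ hlt.
have cy := (seqOf_spec y).1 n.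
have eq : comp y = comp x.
  by rewrite (same_connected_component cy) (same_connected_component cx).
rewrite eq in hlt *.
have [Nn|nN] : (N <= n)%coq_nat \/ (n < N)%coq_nat by lia.
  have := HN n Nn; have := md_ge0 H x (seqOf (comp x) n); lra.
have : / (INR N + 1) <= / (INR n + 1) by apply: inv_mono; lia.
have := md_ge0 H x (seqOf (comp x) n); lra.
Qed.

End Phi.

Section Conn.
Context (X : topologicalType) (d : X -> X -> R) (H : metric_compatible d)
  (ph : X -> R) (ph_pos : forall x, 0 < ph x)
  (ph_lip : forall x y, ph x <= d x y + ph y)
  (ph_small : forall x e, 0 < e ->
     exists z, connected_component [set: X] x z /\ ph z < e) (x0 : X).

Definition Dm (a b : option X) : R :=
  match a, b with
  | Some x, Some y => Rmin (d x y) (ph x + ph y)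
  | Some x, None => ph x
  | None, Some y => ph y
  | None, None => 0
  end.

Definition Yt : topologicalType := mtop (option X) Dm.
Definition inj (x : X) : Yt := Some x.

Lemma Rmin_cases a b : (Rmin a b = a /\ a <= b) \/ (Rmin a b = b /\ b <= a).
Proof. rewrite /Rmin; case: Rle_dec => h; [left|right]; split => //; lra. Qed.

Lemma Dm_metric : metric_compatible (T := Yt) Dm.
Proof.
have hl := ph_lip; have hp := ph_pos.
split.
- case=> [x|] [y|] /=; try (by apply: Rlt_le); last lra.
  apply: Rmin_glb; first exact: (md_ge0 H).
  by have := hp x; have := hp y; lra.
- case=> [x|] [y|] /=; split => //; try (by move=> h; have := hp x; lra);
    try (by move=> h; have := hp y; lra); try (by []).
  + have [[-> _]|[-> _]] := Rmin_cases (d x y) (ph x + ph y).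
      by move/(md_eq H) ->.
    by have := hp x; have := hp y; lra.
  + case=> <-; rewrite (md0 H); apply: Rmin_left.
    by have := hp x; lra.
- case=> [x|] [y|] //=; by rewrite (md_sym H) Rplus_comm.
- case=> [x|] [y|] [z|] /=;
  try (have := hp x); try (have := hp y); try (have := hp z).
  + have := md_tri H x y z.
    have := md_sym H x y; have := md_sym H y z; have := md_sym H x z.
    have := hl x y; have := hl y x; have := hl y z; have := hl z y;
    have := hl x z; have := hl z x.
    have [[? ?]|[? ?]] := Rmin_cases (d x z) (ph x + ph z);
    have [[? ?]|[? ?]] := Rmin_cases (d x y) (ph x + ph y);
    have [[? ?]|[? ?]] := Rmin_cases (d y z) (ph y + ph z); lra.
  + have := hl x y; have := hl y x; have := md_sym H x y.
    have [[? ?]|[? ?]] := Rmin_cases (d x y) (ph x + ph y); lra.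
  + have := md_ge0 H x z.
    have [[? ?]|[? ?]] := Rmin_cases (d x z) (ph x + ph z); lra.
  + lra.
  + have := hl y z; have := hl z y; have := md_sym H y z.
    have [[? ?]|[? ?]] := Rmin_cases (d y z) (ph y + ph z); lra.
  + have := md_ge0 H y y; lra.
  + lra.
  + lra.
- by move=> A; split.
Qed.

Lemma inj_emb : embedding inj.
Proof.
split.
- apply/continuousP => A oA; apply/(mopen_iff H) => x /= Ax.
  have [e [e0 He]] := oA (Some x) Ax.
  exists (Rmin e (ph x)); split; first by apply: Rmin_pos.
  move=> y hy; apply: He => /=.
  have := Rmin_l e (ph x); have := Rmin_l (d x y) (ph x + ph y); lra.
- by move=> x y [].
- move=> U oU; exists (inj @` U); split; last first.
    by apply/seteqP; split => [w hw|w [hw _]] //; split => //; case: hw => x _ <-; exists x.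
  move=> w [x Ux <-].
  have [e [e0 He]] := (iffLR (mopen_iff H U) oU) x Ux.
  exists (Rmin e (ph x)); split; first by apply: Rmin_pos.
  case=> [y|] /= hy; last by have := Rmin_r e (ph x); lra.
  exists y => //; apply: He.
  have := ph_pos y; have := Rmin_l e (ph x); have := Rmin_r e (ph x).
  have [[? ?]|[? ?]] := Rmin_cases (d x y) (ph x + ph y); lra.
Qed.

Lemma None_closure x : closure (inj @` connected_component [set: X] x) (None : Yt).
Proof.
move=> B /(nbhs_ball Dm_metric) [e [e0 He]].
have [z [cz hz]] := ph_small x _ e0.
by exists (inj z); split; [exists z|apply: He].
Qed.

Lemma Yt_connected : connected [set: Yt].
Proof.
have emb := inj_emb.
suff -> : [set: Yt] = \bigcup_(x in [set: X]) closure (inj @` connected_component [set: X] x).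
  apply: bigcup_connected.
    by exists None => x _; apply: None_closure.
  move=> x _; apply: connected_closure; apply: connected_continuous_connected.
    exact: component_connected.
  by apply: continuous_subspaceT; case: emb.
apply/seteqP; split => // -[y|] _.
  exists y => //; apply: subset_closure; exists y => //.
  exact: (@connected_component_refl _ setT y Logic.I).
by exists x0 => //; apply: None_closure.
Qed.

Lemma conn_main : one_point_connectification inj /\ metrizable Yt.
Proof.
split; last by exists Dm; exact: Dm_metric.
split; first exact: inj_emb; first exact: Yt_connected.
  move=> O [w Ow] oO; case: w Ow => [x|] Ow.
    by exists (Some x); split => //; exists x.
  have [e [e0 He]] := oO None Ow.
  have [z [_ hz]] := ph_small x0 _ e0.
  by exists (Some z); split; [apply: He|exists z].
exists None; apply/seteqP; split => [[y|] hy|w ->] //=.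
  by exfalso; apply: hy; exists y.
by case=> y _.
Qed.

End Conn.

Theorem theorem2p6 (X : topologicalType) :
  [set: X] !=set0 ->
  locally_connected X -> metrizable X ->
  ((exists (Y : topologicalType) (f : X -> Y),
       one_point_connectification f /\ metrizable Y)
   <-> ~ (exists x : X, compact (connected_component [set: X] x))).
Proof.
move=> [x0 _] LC [d H]; split.
- move=> [Y [f [[[fc finj fopen] conn _ [p hp]] [dY HY]]]] [x cx].
  pose C := connected_component [set: X] x.
  have oC : open C := comp_open H LC x.
  have Cx : C x := @connected_component_refl _ setT x Logic.I.
  have cK : compact (f @` C) := continuous_compact (continuous_subspaceT fc) cx.
  have clK : closed (f @` C) := compact_closed (m_hausdorff HY) cK.
  have [V [oV hV]] := fopen C oC.
  have rf : range f = ~` [set p] by rewrite -hp setCK.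
  have oR : open (range f).
    rewrite rf; apply/(mopen_iff HY) => z /= zp.
    exists (dY z p); split.
      have := md_ge0 HY z p => h; case: (Rle_lt_or_eq_dec _ _ h) => // /esym /(md_eq HY).
      by move=> /zp.
    by move=> w hw wp; move: hw; rewrite wp; lra.
  have oK : open (f @` C) by rewrite hV; exact: openI.
  have eqK : f @` C = [set: Y].
    apply: conn; first by exists (f x), x.
      by exists (f @` C) => //; rewrite setTI.
    by exists (f @` C) => //; rewrite setTI.
  have : (f @` C) p by rewrite eqK.
  move=> [y _ yp]; have : (~` range f) p by rewrite hp.
  by apply; exists y.
- move=> NC.
  have ph_small : forall x e, 0 < e -> exists z,
      connected_component [set: X] x z /\ phi X d x0 z < e.
    move=> x e e0; have [N hN] := small_inv e e0.
    exists (seqOf X d x0 (connected_component [set: X] x) N); split.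
      exact: ((seqOf_spec X d H NC x0 x).1 N).
    by have := phi_small X d H x0 x N; lra.
  have [hc hm] := @conn_main X d H (phi X d x0) (phi_pos X d H LC NC x0) (phi_lip X d H x0)
    ph_small x0.
  by exists (Yt X d (phi X d x0)), (inj X d (phi X d x0)).
Qed.
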